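(* Let $L$ be a finite lattice. If $\mathsf{C}(L)=\mathsf{Pol}_{0,1}(L)$, then the only tolerances on $L$ are $\mathrm{id}_L=\{(x,x):x\in L\}$ and $L^2$.
   Context: $L$ has bounds $0,1$. An $n$-ary aggregation function on $L$ ($n\ge1$) is a nondecreasing map $A:L^n\to L$ with $A(0,\dots,0)=0$ and $A(1,\dots,1)=1$; $\mathsf{C}(L)$ is the set of all of them. Polynomials on $L$ are functions $L^n\to L$ built from projections and constants by finitely many pointwise joins and meets; $\mathsf{Pol}_{0,1}(L)$ is the set of polynomials preserving $0$ and $1$ (i.e. $p(0,\dots,0)=0$, $p(1,\dots,1)=1$). A tolerance on $L$ is a reflexive, symmetric binary relation $T$ such that $(a,b),(c,d)\in T$ imply $(a\vee c,b\vee d),(a\wedge c,b\wedge d)\in T$. *)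

(* Defs.v *)
From HB Require Import structures.
From mathcomp Require Import all_boot all_order.
Set Implicit Arguments. Unset Strict Implicit. Unset Printing Implicit Defensive.
Import Order.TTheory.
Local Open Scope order_scope.

Inductive lterm (n : nat) (T : Type) : Type :=
  | LVar of 'I_n
  | LCst of T
  | LJoin of lterm n T & lterm n T
  | LMeet of lterm n T & lterm n T.

Section Defs.
Variables (d : Order.disp_t) (L : finTBLatticeType d).

Fixpoint leval (n : nat) (t : lterm n L) (x : 'I_n -> L) : L :=
  match t with
  | LVar i => x i
  | LCst c => c
  | LJoin t1 t2 => leval t1 x `|` leval t2 x
  | LMeet t1 t2 => leval t1 x `&` leval t2 x
  end.

Definition is_polynomial (n : nat) (f : ('I_n -> L) -> L) : Prop :=
  exists t : lterm n L, forall x, f x = leval t x.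

Definition in_Pol01 (n : nat) (f : ('I_n -> L) -> L) : Prop :=
  is_polynomial f /\ f (fun _ => \bot) = \bot /\ f (fun _ => \top) = \top.

Definition is_aggregation (n : nat) (f : ('I_n -> L) -> L) : Prop :=
  (forall x y : 'I_n -> L, (forall i, x i <= y i) -> f x <= f y) /\
  f (fun _ => \bot) = \bot /\ f (fun _ => \top) = \top.

Definition C_eq_Pol01 : Prop :=
  forall n : nat, 0 < n -> forall f : ('I_n -> L) -> L,
    is_aggregation f <-> in_Pol01 f.

Definition is_tolerance (T : L -> L -> Prop) : Prop :=
  (forall a, T a a) /\
  (forall a b, T a b -> T b a) /\
  (forall a b c e, T a b -> T c e -> T (a `|` c) (b `|` e) /\ T (a `&` c) (b `&` e)).

End Defs.

(* Main.v *)
Require Import Defs.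
From HB Require Import structures.
From mathcomp Require Import all_boot all_order.
From Stdlib Require Import Classical.
Local Open Scope order_scope.
Import Order.TTheory.

Lemma leval_tol (d : Order.disp_t) (L : finTBLatticeType d) (T : L -> L -> Prop) :
  is_tolerance T -> forall n (t : lterm n L) x y, (forall i, T (x i) (y i)) ->
  T (leval t x) (leval t y).
Proof.
move=> [Hr [Hs Hc]] n t x y Hxy; elim: t => /= [i|c|t1 IH1 t2 IH2|t1 IH1 t2 IH2].
- exact: Hxy.
- exact: Hr.
- by case: (Hc _ _ _ _ IH1 IH2).
- by case: (Hc _ _ _ _ IH1 IH2).
Qed.

Theorem mainTheorem3 (d : Order.disp_t) (L : finTBLatticeType d) :
  C_eq_Pol01 L ->
  forall T : L -> L -> Prop, is_tolerance T ->
    (forall a b, T a b <-> a = b) \/ (forall a b, T a b).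
Proof.
move=> HC T HT.
have HT' := HT; move: HT' => [Hr [Hs Hc]].
case: (classic (forall a b, T a b -> a = b)) => [H|H].
  by left => a b; split; [apply: H | move=> ->; apply: Hr].
right.
have [u [v [Tuv [luv nuv]]]] : exists u v, T u v /\ u <= v /\ u <> v.
  have [a [b Hab]] : exists a b, ~ (T a b -> a = b).
    apply: NNPP => N; apply: H => a b; apply: NNPP => N2; apply: N; by exists a, b.
  have Tab : T a b by apply: NNPP => N; apply: Hab => /N.
  have nab : a <> b by move=> E; apply: Hab.
  have Tm : T (a `&` b) b by have [_ H2] := Hc _ _ _ _ Tab (Hr b); rewrite meetxx in H2.
  case: (boolP (a `&` b == b)) => [/eqP E|E].
    exists b, a; split; first exact: Hs.
    split; first by rewrite -E leIl.
    by move=> E2; apply: nab.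
  exists (a `&` b), b; split => //; split; first exact: leIr.
  by move=> E2; move: E; rewrite E2 eqxx.
pose f := fun x : 'I_1 -> L => if v <= x ord0 then (\top : L) else \bot.
have Hag : is_aggregation f.
  split.
    move=> x y Hxy; rewrite /f; case: ifP => Hv; last exact: le0x.
    by rewrite (le_trans Hv (Hxy ord0)).
  split; rewrite /f /=; last by rewrite lex1.
  case: ifP => // Hv.
  exfalso; apply: nuv; apply/eqP; rewrite eq_le luv /=.
  exact: le_trans Hv (le0x u).
have [[t Ht] _] := (proj1 (HC 1%N isT f) Hag).
have T01 : T \bot \top.
  have := @leval_tol d L T HT 1%N t (fun _ => u) (fun _ => v) (fun _ => Tuv).
  rewrite -!Ht /f /= lexx.
  case: ifP => // Hvu; exfalso; apply: nuv; apply/eqP; by rewrite eq_le luv Hvu.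
move=> x y.
have Tx1 : T x \top by have [H1 _] := Hc _ _ _ _ T01 (Hr x); rewrite join0x join1x in H1.
have T1y : T \top y by have [H1 _] := Hc _ _ _ _ (Hs _ _ T01) (Hr y); rewrite join0x join1x in H1.
have [_ H1] := Hc _ _ _ _ Tx1 T1y.
by rewrite meetx1 meet1x in H1.
Qed.
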